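(* If a billiard-like interval exchange transformation $f$ of $I=[-1,1)$ satisfies the modified Keane condition, then $f$ has no periodic points.
   Context: An interval exchange transformation of $I=[-1,1)$: a finite partition $\{I_\alpha\}_{\alpha\in\mathcal{A}}$ of $I$ into intervals closed on the left and open on the right ($|\mathcal{A}|\ge2$), and a bijection $f:I\to I$ whose restriction to each $I_\alpha$ is a translation. Let $p_\alpha$ be the left endpoint of $I_\alpha$. $f$ is billiard-like if: each $I_\alpha$ is contained in $[-1,0)$ or in $[0,1)$; each $f(I_\alpha)$ is contained in $[-1,0)$ or in $[0,1)$; and each of $[-1,0)$, $[0,1)$ contains at least two intervals of the partition. A billiard-like $f$ satisfies the modified Keane condition if $f^m(p_\alpha)\ne p_\beta$ for all $m\ge1$, all $\alpha\in\mathcal{A}$, and all $\beta\in\mathcal{A}$ with $p_\beta\notin\{-1,0\}$. *)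

(* Defs.v *)
From mathcomp Require Import all_boot.
From Stdlib Require Import Reals.
Open Scope R_scope.
Set Implicit Arguments.
Unset Strict Implicit.

Definition inI (x : R) : Prop := -1 <= x < 1.

Definition inCO (a b x : R) : Prop := a <= x < b.

Definition is_IET (A : finType) (p q t : A -> R) (f : R -> R) : Prop :=
  Nat.lt 1 #|A| /\
  (forall a : A, p a < q a) /\
  (forall a : A, -1 <= p a /\ q a <= 1) /\
  (forall x, inI x -> exists a : A, inCO (p a) (q a) x) /\
  (forall (a b : A) x, inCO (p a) (q a) x -> inCO (p b) (q b) x -> a = b) /\
  (forall (a : A) x, inCO (p a) (q a) x -> f x = x + t a) /\
  (forall x, inI x -> inI (f x)) /\
  (forall x y, inI x -> inI y -> f x = f y -> x = y) /\
  (forall y, inI y -> exists x, inI x /\ f x = y).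

Definition in_one_half (a b : R) : Prop :=
  (-1 <= a /\ b <= 0) \/ (0 <= a /\ b <= 1).

Definition billiard_like (A : finType) (p q t : A -> R) (f : R -> R) : Prop :=
  is_IET p q t f /\
  (forall a : A, in_one_half (p a) (q a)) /\
  (forall a : A, in_one_half (p a + t a) (q a + t a)) /\
  (exists a b : A, a <> b /\ q a <= 0 /\ q b <= 0) /\
  (exists a b : A, a <> b /\ 0 <= p a /\ 0 <= p b).

Definition modified_keane (A : finType) (p : A -> R) (f : R -> R) : Prop :=
  forall (m : nat) (a b : A), Nat.le 1 m -> p b <> -1 -> p b <> 0 ->
    iter m f (p a) <> p b.

Definition no_periodic_points (f : R -> R) : Prop :=
  forall (x : R) (n : nat), inI x -> Nat.le 1 n -> iter n f x <> x.

(* Main.v *)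
Require Import Defs.
From mathcomp Require Import all_boot.
From Stdlib Require Import Reals.
From Stdlib Require Import Lra Lia ClassicalEpsilon Classical.

Local Open Scope R_scope.

Lemma min_exists (g : nat -> R) (n : nat) : (0 < n)%coq_nat ->
  exists k0, (k0 < n)%coq_nat /\ forall k, (k < n)%coq_nat -> g k0 <= g k.
Proof.
  induction n as [|n IH]; intros Hn; [lia|].
  destruct (Nat.eq_dec n 0) as [->|Hn0].
  - exists 0%nat; split; [lia|]. intros k Hk. assert (k = 0%nat) by lia. subst; lra.
  - destruct (IH ltac:(lia)) as [k0 [Hk0 Hmin]].
    destruct (Rle_dec (g k0) (g n)).
    + exists k0; split; [lia|]. intros k Hk. destruct (Nat.eq_dec k n); [subst; lra| apply Hmin; lia].
    + exists n; split; [lia|]. intros k Hk. destruct (Nat.eq_dec k n); [subst; lra|].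
      specialize (Hmin k ltac:(lia)); lra.
Qed.

Lemma iter_add (T : Type) (f : T -> T) (n m : nat) (x : T) :
  iter (Nat.add n m) f x = iter n f (iter m f x).
Proof. induction n as [|n IH]; simpl; [reflexivity|]. now rewrite IH. Qed.

Lemma iter_Sr (T : Type) (f : T -> T) (n : nat) (x : T) :
  iter (S n) f x = iter n f (f x).
Proof. induction n as [|n IH]; simpl; [reflexivity|]. simpl in IH. now rewrite IH. Qed.

Theorem lemma8p3 (A : finType) (p q t : A -> R) (f : R -> R) :
  billiard_like p q t f -> modified_keane p f -> no_periodic_points f.
Proof.
intros [HIET [Hhalf [Hhalfim [Hleft Hright]]]] Hkeane.
destruct HIET as [Hcard [Hpq [Hbnd [Hcov [Hdisj [Htr [HfI [Hinj Hsurj]]]]]]]].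
assert (Hidx : exists idx : R -> A, forall y, inI y -> inCO (p (idx y)) (q (idx y)) y).
{ destruct Hleft as [a0 _].
  exists (fun y => epsilon (inhabits a0) (fun a => inCO (p a) (q a) y)).
  intros y Hy. apply (epsilon_spec (inhabits a0) (fun a => inCO (p a) (q a) y)).
  now apply Hcov. }
destruct Hidx as [idx Hidx].
assert (Hf : forall y, inI y -> f y = y + t (idx y)).
{ intros y Hy. apply Htr, Hidx, Hy. }
assert (HiterI : forall k y, inI y -> inI (iter k f y)).
{ intros k y Hy; induction k as [|k IH]; simpl; [exact Hy| apply HfI, IH]. }
assert (HinI : forall a y, inCO (p a) (q a) y -> inI y).
{ intros a y [H1 H2]; destruct (Hbnd a); unfold inI; lra. }
assert (LeftEnd : forall a z, (z = -1 \/ z = 0) -> inCO (p a) (q a) z ->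
          p a = z /\ q a < 1 /\ q a <> 0).
{ intros a z Hz [Hz1 Hz2]. destruct (Hbnd a) as [Hb1 Hb2].
  destruct Hz as [-> | ->].
  - assert (Hpa : p a = -1) by lra. split; [exact Hpa|].
    destruct Hleft as [b [c [Hbc [Hb Hc]]]].
    assert (Hd : exists d, d <> a /\ q d <= 0).
    { destruct (classic (b = a)) as [->|Hba]; [exists c; split; [congruence|exact Hc]|].
      exists b; split; [exact Hba| exact Hb]. }
    destruct Hd as [d [Hda Hd]]. pose proof (Hpq d). destruct (Hbnd d).
    destruct (Rlt_le_dec (p d) (q a)) as [Hlt|Hge].
    + exfalso. apply Hda. apply (Hdisj d a (p d)); unfold inCO; lra.
    + lra.
  - destruct (Hhalf a) as [[H1 H2]|[H1 H2]]; [lra|].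
    assert (Hpa : p a = 0) by lra. split; [exact Hpa|].
    destruct Hright as [b [c [Hbc [Hb Hc]]]].
    assert (Hd : exists d, d <> a /\ 0 <= p d).
    { destruct (classic (b = a)) as [->|Hba]; [exists c; split; [congruence|exact Hc]|].
      exists b; split; [exact Hba| exact Hb]. }
    destruct Hd as [d [Hda Hd]]. pose proof (Hpq d). destruct (Hbnd d).
    destruct (Rlt_le_dec (p d) (q a)) as [Hlt|Hge].
    + exfalso. apply Hda. apply (Hdisj d a (p d)); unfold inCO; lra.
    + lra. }
assert (PreEnd : forall y, inI y -> (f y = -1 \/ f y = 0) -> p (idx y) = y).
{ intros y Hy Hfy. pose proof (Hidx y Hy) as [H1 H2]. rewrite (Hf y Hy) in Hfy.
  destruct (Hhalfim (idx y)) as [[H3 H4]|[H3 H4]]; destruct Hfy; lra. }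
assert (NextEnd : forall a s, s = q a -> s < 1 -> p (idx s) = s).
{ intros a s Hs Hs1. pose proof (Hpq a) as Hpqa. destruct (Hbnd a) as [Hba1 Hba2].
  assert (HsI : inI s) by (unfold inI; lra).
  pose proof (Hidx s HsI) as [H1 H2].
  destruct (Req_dec (p (idx s)) s) as [E|E]; [exact E|exfalso].
  assert (Hu : idx s = a).
  { apply (Hdisj (idx s) a (Rmax (p (idx s)) (p a))); unfold inCO;
    unfold Rmax; destruct (Rle_dec (p (idx s)) (p a)); lra. }
  rewrite Hu in H2. lra. }
intros x n Hx Hn Hper.
assert (Hn' : (0 < n)%coq_nat) by lia.
destruct (min_exists (fun k => iter k f x - p (idx (iter k f x))) n Hn') as [k0 [Hk0 Hmin]].
set (d := iter k0 f x - p (idx (iter k0 f x))).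
assert (Hshift : forall k, (k <= n)%coq_nat -> iter k f (x - d) = iter k f x - d).
{ induction k as [|k IH]; intros Hk; [reflexivity|].
  change (iter (S k) f (x - d)) with (f (iter k f (x - d))).
  change (iter (S k) f x) with (f (iter k f x)).
  rewrite IH; [|lia].
  pose proof (HiterI k x Hx) as HI.
  pose proof (Hidx _ HI) as [H1 H2].
  specialize (Hmin k ltac:(lia)). simpl in Hmin.
  assert (Hd0 : 0 <= d) by (unfold d; pose proof (Hidx _ (HiterI k0 x Hx)); unfold inCO in *; lra).
  rewrite (Htr (idx (iter k f x)) (iter k f x - d)); [|unfold inCO, d in *; lra].
  rewrite (Hf _ HI). lra. }
set (b := idx (iter k0 f x)).
assert (Hpb : p b = iter k0 f x - d) by (unfold d, b; lra).
assert (Hperb : iter n f (p b) = p b).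
{ rewrite Hpb -(Hshift k0 ltac:(lia)) -iter_add Nat.add_comm iter_add Hshift; [|lia].
  now rewrite Hper. }
assert (Hb01 : p b = -1 \/ p b = 0).
{ destruct (Req_dec (p b) (-1)); [now left|]. destruct (Req_dec (p b) 0); [now right|].
  exfalso. apply (Hkeane n b b); auto. }
assert (HpbI : inI (p b)) by (unfold inI; destruct Hb01; lra).
pose (z := fun k => iter k f (p b)).
assert (HzI : forall k, inI (z k)) by (intro k; apply HiterI, HpbI).
assert (HzS : forall k, z (S k) = f (z k)) by reflexivity.
assert (Hz : forall k, (k <= n)%coq_nat -> z k = -1 \/ z k = 0).
{ assert (H : forall i, (i <= n)%coq_nat -> z (Nat.sub n i) = -1 \/ z (Nat.sub n i) = 0).
  { induction i as [|i IH]; intros Hi.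
    - rewrite Nat.sub_0_r. unfold z. rewrite Hperb. exact Hb01.
    - assert (Hk : (Nat.sub n i) = S (Nat.sub n (S i))) by lia.
      specialize (IH ltac:(lia)). rewrite Hk HzS in IH.
      pose proof (PreEnd _ (HzI _) IH) as HP.
      destruct (Nat.sub n (S i)) as [|k] eqn:E.
      + exact Hb01.
      + destruct (Req_dec (p (idx (z (S k)))) (-1)) as [E1|E1]; [left; congruence|].
        destruct (Req_dec (p (idx (z (S k)))) 0) as [E2|E2]; [right; congruence|].
        exfalso. apply (Hkeane (S k) b (idx (z (S k)))); auto; lia. }
  intros k Hk. replace k with (Nat.sub n (Nat.sub n k)) by lia. apply H; lia. }
assert (Hz0 : z 0%nat = p b) by reflexivity.
assert (Hzn : z n = p b) by exact Hperb.
destruct (min_exists (fun k => q (idx (z k)) - z k) n Hn') as [k1 [Hk1 Hmin1]].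
set (e := q (idx (z k1)) - z k1).
assert (He0 : 0 < e) by (unfold e; pose proof (Hidx _ (HzI k1)) as [H1 H2]; lra).
assert (He : forall j, (j <= n)%coq_nat -> z j + e <= q (idx (z j))).
{ intros j Hj. destruct (Nat.eq_dec j n) as [->|Hjn].
  - rewrite Hzn. specialize (Hmin1 0%nat Hn'). simpl in Hmin1. unfold e in *. lra.
  - specialize (Hmin1 j ltac:(lia)). simpl in Hmin1. unfold e in *; lra. }
assert (Hw : forall j e', (j <= n)%coq_nat -> 0 <= e' < e ->
          inCO (p (idx (z j))) (q (idx (z j))) (z j + e')).
{ intros j e' Hj He'. pose proof (Hidx _ (HzI j)) as [H1 H2]. specialize (He j Hj).
  unfold inCO; lra. }
assert (HwI : forall j, (j <= n)%coq_nat -> inI (z j + e)).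
{ intros j Hj. pose proof (Hidx _ (HzI j)) as HH.
  destruct (LeftEnd _ _ (Hz j Hj) HH) as [_ [Hq1 _]]. specialize (He j Hj).
  destruct (Hz j Hj) as [E|E]; unfold inI; lra. }
set (s := z k1 + e).
assert (Hsq : s = q (idx (z k1))) by (unfold s, e; lra).
assert (Hs : p (idx s) = s).
{ apply (NextEnd (idx (z k1))); [exact Hsq|].
  destruct (LeftEnd _ _ (Hz k1 ltac:(lia)) (Hidx _ (HzI k1))) as [_ [H _]]. lra. }
assert (Hs01 : s <> -1 /\ s <> 0).
{ destruct (LeftEnd _ _ (Hz k1 ltac:(lia)) (Hidx _ (HzI k1))) as [_ [_ H]].
  pose proof (HzI k1) as [H1 _]. split; [unfold s; lra| rewrite Hsq; exact H]. }
assert (Hnohit : forall c m, Nat.le 1 m -> iter m f (p c) <> s).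
{ intros c m Hm E. apply (Hkeane m c (idx s)); [exact Hm| rewrite Hs; tauto| rewrite Hs; tauto|].
  now rewrite Hs. }
assert (Back : forall j, (j < n)%coq_nat ->
          f (z j + e) = z (S j) + e \/ exists c, f (p c) = z (S j) + e).
{ intros j Hj. destruct (Hsurj _ (HwI (S j) ltac:(lia))) as [u [Hu Hfu]].
  pose proof (Hidx u Hu) as [Hc1 Hc2].
  destruct (Req_dec u (p (idx u))) as [E|E].
  - right. exists (idx u). rewrite -E. exact Hfu.
  - left. set (c := idx u) in *.
    set (eps := Rmin (u - p c) e).
    assert (Heps : 0 < eps <= e /\ eps <= u - p c).
    { unfold eps, Rmin; destruct (Rle_dec (u - p c) e); lra. }
    assert (Hin1 : inCO (p c) (q c) (u - eps)) by (unfold inCO; lra).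
    assert (Hin2 := Hw j (e - eps) ltac:(lia) ltac:(lra)).
    assert (Heq : u - eps = z j + (e - eps)).
    { apply Hinj; [exact (HinI _ _ Hin1)| exact (HinI _ _ Hin2)|].
      rewrite (Htr _ _ Hin1) (Htr _ _ Hin2).
      rewrite (Hf u Hu) in Hfu. fold c in Hfu.
      rewrite HzS (Hf _ (HzI j)) in Hfu. lra. }
    replace (z j + e) with u by lra. exact Hfu. }
assert (Walk : forall i j m, (i <= j)%coq_nat -> (j <= n)%coq_nat ->
          iter m f (z j + e) = s -> iter (Nat.add m i) f (z (Nat.sub j i) + e) = s).
{ induction i as [|i IH]; intros j m Hij Hjn H.
  - now rewrite Nat.add_0_r Nat.sub_0_r.
  - specialize (IH j m ltac:(lia) Hjn H).
    assert (Hk : (Nat.sub j i) = S (Nat.sub j (S i))) by lia. rewrite Hk in IH.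
    destruct (Back (Nat.sub j (S i)) ltac:(lia)) as [E|[c E]].
    + rewrite Nat.add_succ_r iter_Sr E. exact IH.
    + exfalso. apply (Hnohit c (S (Nat.add m i))); [lia|].
      rewrite iter_Sr E. exact IH. }
assert (H1 := Walk k1 k1 0%nat ltac:(lia) ltac:(lia) ltac:(reflexivity)).
rewrite Nat.sub_diag Hz0 -Hzn Nat.add_0_l in H1.
assert (H2 := Walk (Nat.sub n k1) n k1 ltac:(lia) ltac:(lia) H1).
replace (Nat.sub n (Nat.sub n k1)) with k1 in H2 by lia.
replace (Nat.add k1 (Nat.sub n k1)) with n in H2 by lia.
fold s in H2. apply (Hnohit (idx s) n); [lia|]. rewrite Hs. exact H2.
Qed.
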